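(* For every even integer $k \geq 2$ there exists a family $(G_i)_{i\in\mathbb{N}}$ (with $\mathbb{N}=\{0,1,2,\dots\}$) of $k$-degenerate undirected graphs such that $$n(G_i)=\frac{3k+6}{2}+i\,\frac{3k+4}{2}\qquad\text{and}\qquad f(G_i)=\frac{3k-2}{2}+i\,\frac{3k-2}{2}.$$
   Context: All graphs are finite and simple. For a graph $G$, $n(G)$ denotes its number of vertices and $f(G)$ the minimum size of a feedback vertex set, i.e. of a set $F\subseteq V(G)$ such that $G-F$ contains no cycle. An ordering $\phi:V\to\{1,\dots,|V|\}$ (a bijection) is a $k$-elimination ordering if every vertex $v$ has at most $k$ neighbours $u$ with $\phi(u)<\phi(v)$. A graph is $k$-degenerate if it has a $k$-elimination ordering. *)

(* Defs.v *)
From mathcomp Require Import all_boot.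
Set Implicit Arguments. Unset Strict Implicit. Unset Printing Implicit Defensive.

Definition simple_graph (T : finType) (e : rel T) : Prop :=
  symmetric e /\ irreflexive e.

(* A cycle in the subgraph induced by A: a duplicate-free sequence of at
   least 3 vertices of A, consecutive ones adjacent and last adjacent to
   first (path.cycle). *)
Definition acyclic_on (T : finType) (e : rel T) (A : {set T}) : Prop :=
  forall s : seq T, uniq s -> 3 <= size s -> all (fun v => v \in A) s ->
    ~~ cycle e s.

Definition is_fvs (T : finType) (e : rel T) (F : {set T}) : Prop :=
  acyclic_on e (~: F).

Definition fvs_number (T : finType) (e : rel T) (m : nat) : Prop :=
  (exists F : {set T}, is_fvs e F /\ #|F| = m) /\
  (forall F : {set T}, is_fvs e F -> m <= #|F|).

(* phi is a k-elimination ordering: a bijection V -> {0,..,|V|-1}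
   (shifted version of {1,..,|V|}) such that every vertex has at most k
   neighbours earlier in the order. *)
Definition elim_ordering (T : finType) (k : nat) (e : rel T)
    (phi : T -> 'I_#|T|) : Prop :=
  bijective phi /\
  forall v : T, #|[set u | e v u & phi u < phi v]| <= k.

Definition degenerate (T : finType) (k : nat) (e : rel T) : Prop :=
  exists phi : T -> 'I_#|T|, elim_ordering k e phi.

(* Main.v *)
Require Import Defs.
From mathcomp Require Import all_boot zify.
Set Implicit Arguments. Unset Strict Implicit. Unset Printing Implicit Defensive.

Section Constr.
Variable t : nat.
Hypothesis t_pos : 0 < t.

Definition gd (v : nat) := (v + (3*t+1)) %/ (3*t+2).
Definition ps (v : nat) := (v + (3*t+1)) %% (3*t+2).

Lemma dec v : v + (3*t+1) = gd v * (3*t+2) + ps v.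
Proof. exact: divn_eq. Qed.

Lemma ps_lt v : ps v < 3*t+2.
Proof. by rewrite ltn_pmod // addn2. Qed.

Lemma same_gd u v : gd u = gd v -> u + ps v = v + ps u.
Proof.
move=> h; have := dec u; have := dec v; rewrite h.
move: (gd v * (3*t+2)) => G; lia.
Qed.

Lemma next_gd u v : (gd u).+1 = gd v -> u + (3*t+2) + ps v = v + ps u.
Proof.
move=> h; have := dec u; have := dec v; rewrite -h [(gd u).+1 * _]mulSn.
move: (gd u * (3*t+2)) => G; lia.
Qed.

Lemma gd_ps_inj u v : gd u = gd v -> ps u = ps v -> u = v.
Proof. move=> /same_gd; lia. Qed.

Lemma gd_bound i v : v < 3*t+3 + i*(3*t+2) -> gd v <= i.+1.
Proof.
move=> hv; rewrite /gd -ltnS ltn_divLR; last lia.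
rewrite [i.+2 * _]mulSn [i.+1 * _]mulSn; lia.
Qed.

Definition vtx g p := g*(3*t+2) + p + 1.

Lemma vtx_gd g p : p < 3*t+2 -> gd (vtx g p) = g.+1.
Proof.
move=> hp; rewrite /gd /vtx.
have -> : g * (3 * t + 2) + p + 1 + (3 * t + 1) = g.+1 * (3*t+2) + p by rewrite [g.+1 * _]mulSn; lia.
by rewrite divnMDl ?divn_small ?addn0 //; lia.
Qed.

Lemma vtx_ps g p : p < 3*t+2 -> ps (vtx g p) = p.
Proof.
move=> hp; rewrite /ps /vtx.
have -> : g * (3 * t + 2) + p + 1 + (3 * t + 1) = g.+1 * (3*t+2) + p by rewrite [g.+1 * _]mulSn; lia.
by rewrite modnMDl modn_small.
Qed.

Definition inQ v := ps v <= 2*t.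
Definition inT v := ps v <= t.
Definition inB v := (t < ps v) && (ps v <= 2*t).
Definition inS v := ps v == 2*t+1.
Definition inU v := 2*t+1 < ps v.
Definition inR v := 2*t < ps v.

Definition sameg u v := (gd u == gd v) &&
  [|| inQ u && inQ v, inR u && inR v, inB u && inR v | inR u && inB v].
Definition crs u v := ((gd u).+1 == gd v) && inU u && (inT v || inS v).
Definition edg u v := (u != v) && [|| sameg u v, crs u v | crs v u].

Lemma edg_sym u v : edg u v = edg v u.
Proof.
rewrite /edg /sameg eq_sym [gd v == gd u]eq_sym.
by case: (inQ u); case: (inQ v); case: (inR u); case: (inR v); case: (inB u); case: (inB v);
   case: (crs u v); case: (crs v u); rewrite ?andbF ?andbT ?orbT ?orbF.
Qed.

Lemma edg_irr u : edg u u = false.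
Proof. by rewrite /edg eqxx. Qed.


Lemma edgQ u v : u != v -> gd u = gd v -> inQ u -> inQ v -> edg u v.
Proof. move=> ne e qu qv; apply/andP; split=> //; apply/orP; left. by rewrite /sameg e eqxx qu qv. Qed.

Lemma edgR u v : u != v -> gd u = gd v -> inR u -> inR v -> edg u v.
Proof. move=> ne e qu qv; apply/andP; split=> //; apply/orP; left. by rewrite /sameg e eqxx qu qv !orbT. Qed.

Lemma edgBR u v : gd u = gd v -> inB u -> inR v -> edg u v.
Proof.
move=> e bu rv; apply/andP; split; last by apply/orP; left; rewrite /sameg e eqxx bu rv !orbT.
apply/eqP=> E; move: bu rv; rewrite E /inB /inR; lia.
Qed.

Lemma edgC u v : (gd u).+1 = gd v -> inU u -> inT v || inS v -> edg u v.
Proof.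
move=> e uu tv; apply/andP; split; last by rewrite /crs e eqxx uu tv !orbT.
by apply/eqP=> E; move: e; rewrite E; lia.
Qed.

Lemma window v u : edg v u -> u < v ->
  (v - u <= 2*t /\ (inS v -> v - u <= t)) \/ (inS v /\ 2*t+2 <= v - u <= 3*t+1).
Proof.
case/andP=> _ /or3P [hs|/andP[/andP[/eqP e _] _]|/andP[/andP[/eqP e uu] tv]] uv.
- case/andP: hs => /eqP /same_gd e; have := ps_lt u; have := ps_lt v.
  rewrite /inQ /inR /inB /inS => hv hu.
  case/or4P=> /andP[h1 h2]; left; lia.
- have := next_gd e; have := ps_lt v; lia.
- have := next_gd e; have := ps_lt v; have := ps_lt u.
  rewrite /inU in uu; case/orP: tv; rewrite /inT /inS => h; [left|right]; lia.
Qed.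

Definition Gr n : rel 'I_n := fun u v => edg (nat_of_ord u) (nat_of_ord v).
Arguments Gr : clear implicits.

Lemma Gr_simple n : simple_graph (Gr n).
Proof. split; [move=> u v; exact: edg_sym | move=> u; exact: edg_irr]. Qed.

Lemma Gr_degen n : degenerate (2*t) (Gr n).
Proof.
exists (cast_ord (esym (card_ord n))); split.
  by exists (cast_ord (card_ord n)); [exact: cast_ordKV | exact: cast_ordK].
move=> v.
pose f (j : 'I_(2*t)) : 'I_n :=
  insubd v (if inS v && (t <= j) then v - t - 2 - j else v - 1 - j).
apply: (@leq_trans #|[set f j | j in [set: 'I_(2*t)]]|); last first.
  by rewrite (leq_trans (leq_imset_card _ _)) // cardsT card_ord.
apply: subset_leq_card; apply/subsetP=> u; rewrite inE /= => /andP[e uv].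
have {}uv : u < v by [].
apply/imsetP.
have [[d2 dS]|[vS d3]] := window e uv.
- move: d2 dS; rewrite /= => d2 dS.
  have hj : v - u - 1 < 2*t by lia.
  exists (Ordinal hj); first by rewrite inE.
  apply: val_inj; rewrite val_insubd /=.
  have -> : (if inS v && (t <= v - u - 1) then v - t - 2 - (v - u - 1) else v - 1 - (v - u - 1)) = u.
    by case: (inS v) dS => [/(_ isT) h|_] /=; [rewrite ifF; [lia|apply/negbTE; rewrite -ltnNge; lia] | lia].
  by rewrite ltn_ord.
- move: vS d3; rewrite /= => vS d3.
  have hj : v - u - t - 2 < 2*t by lia.
  exists (Ordinal hj); first by rewrite inE.
  apply: val_inj; rewrite val_insubd /= vS /=.
  have -> : (if t <= v - u - t - 2 then v - t - 2 - (v - u - t - 2) else v - 1 - (v - u - t - 2)) = u.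
    by rewrite ifT; lia.
  by rewrite ltn_ord.
Qed.

Lemma tri (T : finType) (e : rel T) (A : {set T}) x y z :
  acyclic_on e A -> x \in A -> y \in A -> z \in A ->
  x != y -> y != z -> x != z -> e x y -> e y z -> e z x -> False.
Proof.
move=> ac hx hy hz nxy nyz nxz exy eyz ezx.
have := ac [:: x; y; z]; rewrite /= !inE !negb_or nxy nxz nyz hx hy hz exy eyz ezx.
by move/(_ isT isT isT).
Qed.

Lemma quad (T : finType) (e : rel T) (A : {set T}) x y z w :
  acyclic_on e A -> x \in A -> y \in A -> z \in A -> w \in A ->
  x != y -> x != z -> x != w -> y != z -> y != w -> z != w ->
  e x y -> e y z -> e z w -> e w x -> False.
Proof.
move=> ac hx hy hz hw nxy nxz nxw nyz nyw nzw exy eyz ezw ewx.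
have := ac [:: x; y; z; w]; rewrite /= !inE !negb_or nxy nxz nxw nyz nyw nzw hx hy hz hw exy eyz ezw ewx.
by move/(_ isT isT isT).
Qed.

Lemma neq_gd n (u v : 'I_n) : gd u != gd v -> u != v.
Proof. by apply: contraNneq => ->. Qed.

Lemma neq_ps n (u v : 'I_n) : ps u != ps v -> u != v.
Proof. by apply: contraNneq => ->. Qed.

Lemma clique2 n (A X : {set 'I_n}) : acyclic_on (Gr n) A ->
  {in X &, forall x y, x != y -> Gr n x y} -> #|A :&: X| <= 2.
Proof.
move=> ac cl; rewrite leqNgt; apply/card_gt2P => -[x [y [z [[]]]]].
rewrite !inE => /andP[ax xx] /andP[ay yx] /andP[az zx] [nxy nyz nzx].
apply: (tri ac ax ay az nxy nyz); first by rewrite eq_sym.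
- exact: cl.
- exact: cl.
- exact: cl.
Qed.


Lemma U_R u : inU u -> inR u. Proof. rewrite /inU /inR; lia. Qed.
Lemma S_R u : inS u -> inR u. Proof. rewrite /inS /inR; lia. Qed.
Lemma QnT_B u : inQ u -> ~~ inT u -> inB u. Proof. rewrite /inQ /inT /inB; lia. Qed.
Lemma psSQ u v : inS u -> inQ v -> ps u != ps v. Proof. rewrite /inS /inQ; lia. Qed.
Lemma psUQ u v : inU u -> inQ v -> ps u != ps v. Proof. rewrite /inU /inQ; lia. Qed.
Lemma psSU u v : inS u -> inU v -> ps u != ps v. Proof. rewrite /inS /inU; lia. Qed.
Lemma gdS g : g != g.+1. Proof. by rewrite neq_ltn ltnSn. Qed.
Lemma part_arith (D a s c : nat) (p q : bool) : D <= a + s + c -> a <= 2 -> c <= 2 -> s <= 1 ->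
  ~~ ((1 <= s) && (2 <= c)) -> (0 < c -> q) ->
  (p -> ~~ ((2 <= a) && (1 <= s))) -> (p -> ~~ ((2 <= a) && (2 <= c))) ->
  D + p <= 3 + q.
Proof. case: p; case: q => /=; try lia. Qed.

Definition Dg n g : {set 'I_n} := [set v : 'I_n | gd v == g].
Definition Qg n g : {set 'I_n} := [set v : 'I_n | (gd v == g) && inQ v].
Definition Sg n g : {set 'I_n} := [set v : 'I_n | (gd v == g) && inS v].
Definition Ug n g : {set 'I_n} := [set v : 'I_n | (gd v == g) && inU v].
Definition piA n (A : {set 'I_n}) g : bool := [exists v in A, (gd v == g) && inU v].

Lemma gadget n (A : {set 'I_n}) g : acyclic_on (Gr n) A ->
  #|A :&: Dg n g.+1| + piA A g <= 3 + piA A g.+1.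
Proof.
move=> ac.
apply: (part_arith (a := #|A :&: Qg n g.+1|) (s := #|A :&: Sg n g.+1|) (c := #|A :&: Ug n g.+1|)).
- apply: (leq_trans _ (leq_add (leq_card_setU _ _).1 (leqnn _))).
  apply: (leq_trans _ (leq_card_setU _ _).1); apply: subset_leq_card.
  apply/subsetP=> v; rewrite !inE => /andP[av /eqP gv]; rewrite av gv eqxx /=.
  rewrite /inQ /inS /inU; have := ps_lt v; clear; lia.
- apply: clique2 ac _ => x y; rewrite !inE => /andP[/eqP gx qx] /andP[/eqP gy qy] nxy.
  by apply: edgQ => //; rewrite gx gy.
- apply: clique2 ac _ => x y; rewrite !inE => /andP[/eqP gx qx] /andP[/eqP gy qy] nxy.
  by apply: (edgR nxy _ (U_R qx) (U_R qy)); rewrite gx gy.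
- apply/card_le1_eqP => x y; rewrite !inE => /andP[_ /andP[/eqP gx /eqP sx]] /andP[_ /andP[/eqP gy /eqP sy]].
  by apply: val_inj; apply: gd_ps_inj; rewrite ?gx ?gy ?sx ?sy.
- apply/negP => /andP[].
  rewrite card_gt0 => /set0Pn [p]; rewrite !inE => /andP[ap /andP[/eqP gp sp]].
  move/card_gt1P => [x [y []]]; rewrite !inE => /andP[ax /andP[/eqP gx ux]] /andP[ay /andP[/eqP gy uy]] nxy.
  have npx : p != x by apply: neq_ps; apply: psSU.
  have npy : p != y by apply: neq_ps; apply: psSU.
  apply: (tri ac ap ax ay npx nxy npy).
  + by apply: (edgR npx _ (S_R sp) (U_R ux)); rewrite gp gx.
  + by apply: (edgR nxy _ (U_R ux) (U_R uy)); rewrite gy gx.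
  + by apply: (edgR _ _ (U_R uy) (S_R sp)); rewrite 1?eq_sym // gp gy.
- rewrite card_gt0 => /set0Pn [x]; rewrite !inE => /andP[ax gx].
  by apply/existsP; exists x; rewrite ax.
- move/existsP => [w /andP[aw /andP[/eqP gw uw]]].
  apply/negP => /andP[].
  move/card_gt1P => [x [y []]]; rewrite !inE => /andP[ax /andP[/eqP gx qx]] /andP[ay /andP[/eqP gy qy]] nxy.
  rewrite card_gt0 => /set0Pn [p]; rewrite !inE => /andP[ap /andP[/eqP gp sp]].
  have nwx : w != x by apply: neq_gd; rewrite gw gx gdS.
  have nwy : w != y by apply: neq_gd; rewrite gw gy gdS.
  have nwp : w != p by apply: neq_gd; rewrite gw gp gdS.
  have nxp : x != p by apply: neq_ps; rewrite eq_sym; apply: psSQ.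
  have nyp : y != p by apply: neq_ps; rewrite eq_sym; apply: psSQ.
  have exy : Gr n x y by apply: edgQ => //; rewrite gx gy.
  have ewp : Gr n w p by apply: (edgC _ uw); rewrite ?gw ?gp ?sp ?orbT.
  case: (boolP (inT x)) => tx; case: (boolP (inT y)) => ty.
  + apply: (tri ac aw ax ay nwx nxy nwy).
    * by apply: (edgC _ uw); rewrite ?gw ?gx ?tx.
    * exact: exy.
    * by rewrite /Gr edg_sym; apply: (edgC _ uw); rewrite ?gw ?gy ?ty.
  + apply: (quad ac aw ax ay ap nwx nwy nwp nxy nxp nyp).
    * by apply: (edgC _ uw); rewrite ?gw ?gx ?tx.
    * exact: exy.
    * by apply: (edgBR _ (QnT_B qy ty) (S_R sp)); rewrite gy gp.
    * by rewrite /Gr edg_sym.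
  + have nyx : y != x by rewrite eq_sym.
    apply: (quad ac aw ay ax ap nwy nwx nwp nyx nyp nxp).
    * by apply: (edgC _ uw); rewrite ?gw ?gy ?ty.
    * by rewrite /Gr edg_sym.
    * by apply: (edgBR _ (QnT_B qx tx) (S_R sp)); rewrite gx gp.
    * by rewrite /Gr edg_sym.
  + have npx : p != x by rewrite eq_sym.
    apply: (tri ac ap ax ay npx nxy); first by rewrite eq_sym.
    * by rewrite /Gr edg_sym; apply: (edgBR _ (QnT_B qx tx) (S_R sp)); rewrite gx gp.
    * exact: exy.
    * by apply: (edgBR _ (QnT_B qy ty) (S_R sp)); rewrite gy gp.
- move/existsP => [w /andP[aw /andP[/eqP gw uw]]].
  apply/negP => /andP[].
  move/card_gt1P => [x [y []]]; rewrite !inE => /andP[ax /andP[/eqP gx qx]] /andP[ay /andP[/eqP gy qy]] nxy.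
  move/card_gt1P => [p [p' []]]; rewrite !inE => /andP[ap /andP[/eqP gp up]] /andP[ap' /andP[/eqP gp' up']] npp.
  have nwx : w != x by apply: neq_gd; rewrite gw gx gdS.
  have nwy : w != y by apply: neq_gd; rewrite gw gy gdS.
  have exy : Gr n x y by apply: edgQ => //; rewrite gx gy.
  have epp : Gr n p p' by apply: (edgR npp _ (U_R up) (U_R up')); rewrite gp gp'.
  have key : forall z, z \in A -> gd z = g.+1 -> inQ z -> ~~ inT z -> False.
    move=> z az gz qz tz.
    have npz : p != z by apply: neq_ps; apply: psUQ.
    have np'z : p' != z by apply: neq_ps; apply: psUQ.
    apply: (tri ac ap ap' az npp np'z npz epp).
    + by rewrite /Gr edg_sym; apply: (edgBR _ (QnT_B qz tz) (U_R up')); rewrite gz gp'.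
    + by apply: (edgBR _ (QnT_B qz tz) (U_R up)); rewrite gz gp.
  case: (boolP (inT x)) => tx; last exact: (key x ax gx qx tx).
  case: (boolP (inT y)) => ty; last exact: (key y ay gy qy ty).
  apply: (tri ac aw ax ay nwx nxy nwy).
  + by apply: (edgC _ uw); rewrite ?gw ?gx ?tx.
  + exact: exy.
  + by rewrite /Gr edg_sym; apply: (edgC _ uw); rewrite ?gw ?gy ?ty.
Qed.

Definition pre n m : {set 'I_n} := [set v : 'I_n | gd v <= m].

Lemma pre_step n (A : {set 'I_n}) m :
  #|A :&: pre n m.+1| = #|A :&: pre n m| + #|A :&: Dg n m.+1|.
Proof.
have e1 : (A :&: pre n m.+1) :&: pre n m = A :&: pre n m.
  apply/setP=> v; rewrite !inE; case: (v \in A); rewrite ?andbF ?andFb ?andbT ?andTb //.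
  by case h: (gd v <= m); rewrite ?andbT ?andbF // (leqW h).
have e2 : (A :&: pre n m.+1) :\: pre n m = A :&: Dg n m.+1.
  apply/setP=> v; rewrite !inE; case: (v \in A); rewrite ?andbF ?andFb ?andbT ?andTb //.
  by rewrite andbC -ltnNge eqn_leq.
by rewrite -[LHS](cardsID (pre n m)) e1 e2.
Qed.

Lemma gd0 v : gd v = 0 -> v = 0 /\ ps v = 3*t+1.
Proof. move=> h; have := dec v; have := ps_lt v; rewrite h mul0n add0n; lia. Qed.

Lemma pre0 n (A : {set 'I_n}) : #|A :&: pre n 0| <= piA A 0.
Proof.
have h1 : #|A :&: pre n 0| <= 1.
  apply/card_le1_eqP => x y; rewrite !inE !leqn0 => /andP[_ gx] /andP[_ gy].
  have [hx _] := gd0 (eqP gx); have [hy _] := gd0 (eqP gy).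
  by apply: val_inj; rewrite /= hx hy.
case P0: (piA A 0) => //=.
rewrite leqn0 cards_eq0; apply/eqP/setP=> x; rewrite !inE.
apply/negP=> /andP[ax]; rewrite leqn0 => /eqP gx.
move: P0 => /negbT /existsPn /(_ x); rewrite ax gx eqxx /=.
rewrite /inU; have [_ ->] := gd0 gx; lia.
Qed.

Lemma bound n i (A : {set 'I_n}) : n = 3*t+3 + i*(3*t+2) -> acyclic_on (Gr n) A ->
  #|A| <= 3*i + 4.
Proof.
move=> hn ac.
have H : forall m, #|A :&: pre n m| <= 3*m + piA A m.
  elim=> [|m IH]; first by rewrite muln0 add0n pre0.
  rewrite pre_step; have := gadget m ac; move: IH.
  case: (piA A m); case: (piA A m.+1) => /=; lia.
have -> : A = A :&: pre n i.+1.
  apply/setP=> v; rewrite !inE gd_bound ?andbT //; rewrite -hn; exact: ltn_ord.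
by apply: leq_trans (H i.+1) _; case: (piA A i.+1) => /=; lia.
Qed.

Lemma deg1_acyclic (T : finType) (e : rel T) (A : {set T}) : symmetric e ->
  (forall x y z, x \in A -> y \in A -> z \in A -> e x y -> e x z -> y = z) ->
  acyclic_on e A.
Proof.
move=> sym H s; case: s => [|x [|y [|z s]]] //= us hs hA.
rewrite rcons_path /=; apply/negP => /and4P[exy _ _ ewx].
have hw : last z s \in z :: s by exact: mem_last.
rewrite sym in ewx.
move: hA us => /and4P[ax ay az /allP hs'] /and4P[_ ys _ _].
have aw : last z s \in A.
  by move: hw; rewrite inE => /orP[/eqP ->|/hs'].
have ey := H _ _ _ ax ay aw exy ewx.
by move: ys; rewrite ey hw.
Qed.

Definition inA i v := (gd v != 0) &&
  [|| ps v == 0, ps v == 1, ps v == 2*t+1 | (gd v == i.+1) && (ps v == 2*t+2)].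

Lemma nbr i v u : inA i v -> inA i u -> edg v u -> gd u <= i.+1 -> gd v <= i.+1 ->
  gd u = gd v /\ (ps v + ps u = 1 \/ ps v + ps u = 4*t+3).
Proof.
move=> av au /andP[nvu /or3P[hs|hc|hc]] gu gv.
- case/andP: hs => /eqP e hs; split=> //.
  have hne : ps u != ps v.
    by apply: contra nvu => /eqP e'; apply/eqP; apply: gd_ps_inj.
  move: av au hs hne; rewrite /inA /inQ /inR /inB; move: t_pos; clear; lia.
- case/andP: hc => /andP[/eqP e uv] _.
  move: av uv gu; rewrite /inA /inU -e; move: t_pos; clear; lia.
- case/andP: hc => /andP[/eqP e uu] _.
  move: au uu gv; rewrite /inA /inU -e; move: t_pos; clear; lia.
Qed.

Definition A0 n i : {set 'I_n} := [set v : 'I_n | inA i v].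

Lemma A0_acyclic n i : n = 3*t+3 + i*(3*t+2) -> acyclic_on (Gr n) (A0 n i).
Proof.
move=> hn; apply: deg1_acyclic; first by move=> x y; exact: edg_sym.
have gb : forall v : 'I_n, gd v <= i.+1.
  by move=> v; apply: gd_bound; rewrite -hn; exact: ltn_ord.
move=> x y z; rewrite !inE => ax ay az exy exz.
have [g1 p1] := nbr ax ay exy (gb y) (gb x).
have [g2 p2] := nbr ax az exz (gb z) (gb x).
apply: val_inj => /=; apply: gd_ps_inj; first by rewrite g1 g2.
move: p1 p2 (ps_lt x) (ps_lt y) (ps_lt z); clear; lia.
Qed.

Lemma three_le (T : finType) (X : {set T}) a b c : a \in X -> b \in X -> c \in X ->
  a != b -> b != c -> c != a -> 2 < #|X|.
Proof. by move=> ha hb hc nab nbc nca; apply/card_gt2P; exists a, b, c. Qed.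

Lemma vtx_lt n i g p : n = 3*t+3 + i*(3*t+2) -> g <= i -> p < 3*t+2 -> vtx g p < n.
Proof.
move=> -> gi hp; rewrite /vtx.
have : g * (3*t+2) <= i * (3*t+2) by rewrite leq_mul2r gi orbT.
move: hp; clear; lia.
Qed.

Lemma A0_in n i g p (h : vtx g p < n) : g <= i -> p < 3*t+2 ->
  (p == 0) || (p == 1) || (p == 2*t+1) || (g == i) && (p == 2*t+2) ->
  (Ordinal h : 'I_n) \in A0 n i :&: Dg n g.+1.
Proof.
move=> gi hp hpp; rewrite !inE /= /inA vtx_gd // vtx_ps // eqxx andbT /=.
by move: hpp; clear; case/orP; [case/orP; [case/orP => ->; rewrite ?orbT|move=> ->; rewrite ?orbT]|case/andP=> /eqP -> ->; rewrite eqxx !orbT].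
Qed.

Lemma ord_neq n (a b : 'I_n) : nat_of_ord a != nat_of_ord b -> a != b.
Proof. by apply: contraNneq => ->. Qed.

Lemma A0_gadget n i g : n = 3*t+3 + i*(3*t+2) -> g <= i -> 2 < #|A0 n i :&: Dg n g.+1|.
Proof.
move=> hn gi.
have l0 : 0 < 3*t+2 by lia.
have l1 : 1 < 3*t+2 by lia.
have l2 : 2*t+1 < 3*t+2 by lia.
apply: (three_le (A0_in (vtx_lt hn gi l0) gi l0 _) (A0_in (vtx_lt hn gi l1) gi l1 _)
                 (A0_in (vtx_lt hn gi l2) gi l2 _)); rewrite ?eqxx ?orbT //;
  apply: ord_neq; rewrite /= /vtx; move: t_pos; clear; lia.
Qed.

Lemma A0_last n i : n = 3*t+3 + i*(3*t+2) -> 3 < #|A0 n i :&: Dg n i.+1|.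
Proof.
move=> hn.
have ii : i <= i by [].
have l0 : 0 < 3*t+2 by lia.
have l1 : 1 < 3*t+2 by lia.
have l2 : 2*t+1 < 3*t+2 by lia.
have l3 : 2*t+2 < 3*t+2 by lia.
set d : 'I_n := Ordinal (vtx_lt hn ii l3).
have hd : d \in A0 n i :&: Dg n i.+1 by apply: A0_in; rewrite ?eqxx ?orbT.
rewrite (cardsD1 d) hd ltnS.
have inD : forall p (h : p < 3*t+2), p != 2*t+2 ->
   (p == 0) || (p == 1) || (p == 2*t+1) || (i == i) && (p == 2*t+2) ->
   (Ordinal (vtx_lt hn ii h) : 'I_n) \in (A0 n i :&: Dg n i.+1) :\ d.
  move=> p h np hpp; rewrite in_setD1 A0_in // andbT.
  by apply: ord_neq; rewrite /= /vtx; move: np; clear; lia.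
apply: (three_le (inD 0 l0 _ _) (inD 1 l1 _ _) (inD (2*t+1) l2 _ _)); rewrite ?eqxx ?orbT //;
  try (apply: ord_neq; rewrite /= /vtx); move: t_pos; clear; lia.
Qed.

Lemma A0_card n i : n = 3*t+3 + i*(3*t+2) -> 3*i + 4 <= #|A0 n i|.
Proof.
move=> hn.
have H : forall m, m <= i -> 3*m <= #|A0 n i :&: pre n m|.
  elim=> [|m IH] hm; first by rewrite muln0.
  rewrite pre_step; have := A0_gadget hn (ltnW hm); have := IH (ltnW hm); lia.
apply: leq_trans (subset_leq_card (subsetIl (A0 n i) (pre n i.+1))).
rewrite pre_step; have := A0_last hn; have := H i (leqnn i); lia.
Qed.

Lemma Gr_fvs n i m : n = 3*t+3 + i*(3*t+2) -> m + (3*i+4) = n -> fvs_number (Gr n) m.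
Proof.
move=> hn hm; split.
  exists (~: A0 n i); split; first by rewrite /is_fvs setCK; exact: A0_acyclic.
  have := cardsC (A0 n i); rewrite card_ord.
  have := A0_card hn; have := bound hn (A0_acyclic hn); clear hn.
  move: #|~: A0 n i| #|A0 n i| => X Y; lia.
move=> F hF; have := bound hn hF; have := cardsC F; rewrite card_ord; clear hn.
move: #|F| #|~: F| => X Y; lia.
Qed.

End Constr.

Theorem mainTheorem1 (k : nat) : 2 <= k -> ~~ odd k ->
  exists G : forall i : nat, rel 'I_((3 * k + 6) %/ 2 + i * ((3 * k + 4) %/ 2)),
    forall i : nat,
      simple_graph (G i) /\ degenerate k (G i) /\
      fvs_number (G i) ((3 * k - 2) %/ 2 + i * ((3 * k - 2) %/ 2)).
Proof.
move=> k2 kev.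
have hk : k = (k./2).*2 by rewrite -{1}(odd_double_half k) (negbTE kev).
set t := k./2 in hk.
have tp : 0 < t by move: k2; rewrite hk; lia.
exists (fun i => @Gr t ((3 * k + 6) %/ 2 + i * ((3 * k + 4) %/ 2))) => i.
split; first exact: Gr_simple.
split.
  have -> : k = 2 * t by rewrite hk; lia.
  exact: Gr_degen.
apply: (Gr_fvs tp (i := i)).
- have -> : (3 * k + 6) %/ 2 = 3 * t + 3 by rewrite hk; lia.
  have -> : (3 * k + 4) %/ 2 = 3 * t + 2 by rewrite hk; lia.
  by [].
- have -> : (3 * k + 6) %/ 2 = 3 * t + 3 by rewrite hk; lia.
  have -> : (3 * k + 4) %/ 2 = 3 * t + 2 by rewrite hk; lia.
  have -> : (3 * k - 2) %/ 2 = 3 * t - 1 by rewrite hk; lia.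
  rewrite mulnBr muln1 mulnDr; move: tp; clear; nia.
Qed.
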